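(* Let $1\le k<n$. The transition matrix $K$ of the Burnside process on $[k]^n$ satisfies $$K(u,v)\ge\frac{1}{(k-1)!\,k^n}\quad\text{for all }u,v\in[k]^n.$$
   Context: $S_k$ acts on $[k]^n$ by $\sigma(u_1,\dots,u_n)=(\sigma(u_1),\dots,\sigma(u_n))$. The Burnside process on $[k]^n$ is the Markov chain which, from $u$, chooses $\sigma$ uniformly among permutations of $[k]$ fixing every value appearing in $u$, then produces $v\in[k]^n$ by choosing each coordinate independently and uniformly among the fixed points of $\sigma$; i.e. $K(u,v)=\sum_{\sigma\in G_u\cap G_v}\frac{1}{|G_u|\,\mathrm{fp}(\sigma)^n}$ with $G_u=\{\sigma:\sigma u=u\}$ and $\mathrm{fp}(\sigma)$ the number of fixed points of $\sigma$. *)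

(* Defs.v *)
From HB Require Import structures.
From mathcomp Require Import all_boot all_order all_algebra all_fingroup.
Set Implicit Arguments. Unset Strict Implicit. Unset Printing Implicit Defensive.
Import Order.TTheory GRing.Theory Num.Theory.

Definition fp (k : nat) (s : {perm 'I_k}) : nat := #|[set x | s x == x]|.

Definition stab (k n : nat) (u : {ffun 'I_n -> 'I_k}) : {set {perm 'I_k}} :=
  [set s : {perm 'I_k} | [ffun i => s (u i)] == u].

Definition burnsideK (k n : nat) (u v : {ffun 'I_n -> 'I_k}) : rat :=
  \sum_(s in stab u :&: stab v)
     (1 / ((#|stab u|)%:R * ((fp s)%:R ^+ n)))%R.

(* Main.v *)
Require Import Defs.
From HB Require Import structures.
From mathcomp Require Import all_boot all_order all_algebra all_fingroup.
Import Order.TTheory GRing.Theory Num.Theory.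

Lemma card_stab_pt k (x : 'I_k) : #|'C[x | 'P]%g| = k.-1`!.
Proof.
have := card_orbit_stab 'P [set: {perm 'I_k}]%G x.
have -> : orbit 'P [set: {perm 'I_k}]%G x = setT.
  apply/setP => y; rewrite inE; apply/orbitP; exists (tperm x y); rewrite ?inE //.
  by rewrite /= apermE tpermL.
rewrite setTI cardsT card_ord cardsT card_Sn.
case: k x => [[]//|k] x /=.
by rewrite factS => /eqP; rewrite eqn_pmul2l // => /eqP.
Qed.

Lemma stab_sub k n (u : {ffun 'I_n -> 'I_k}) (i : 'I_n) :
  stab u \subset 'C[u i | 'P]%g.
Proof.
apply/subsetP => s; rewrite inE => /eqP hs.
apply/astab1P; rewrite /= apermE.
by move/ffunP: hs => /(_ i); rewrite ffunE.
Qed.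

Lemma fp1 k : fp (1%g : {perm 'I_k}) = k.
Proof.
rewrite /fp -[RHS]card_ord; apply: eq_card => x; by rewrite inE perm1 eqxx.
Qed.

Theorem lemma4p4 (k n : nat) (hk : (1 <= k)%N) (hkn : (k < n)%N)
  (u v : {ffun 'I_n -> 'I_k}) :
  (1 / (((k.-1)`!)%:R * (k%:R ^+ n)) <= burnsideK u v :> rat)%R.
Proof.
have i0 : 'I_n by exists 0%N; apply: leq_ltn_trans hkn.
have h1 : (1%g : {perm 'I_k}) \in stab u :&: stab v.
  by rewrite !inE; apply/andP; split; apply/eqP/ffunP => i; rewrite ffunE perm1.
rewrite /burnsideK (bigD1 _ h1) /= fp1.
rewrite -[X in (X <= _)%R]addr0 lerD //; last first.
  by apply: sumr_ge0 => s _; rewrite div1r invr_ge0 mulr_ge0 // exprn_ge0.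
have hc : (0 < #|stab u|)%N by apply/card_gt0P; exists 1%g; move: h1; rewrite inE => /andP[].
have hle : (#|stab u| <= (k.-1)`!)%N by rewrite -(card_stab_pt k (u i0)); apply: subset_leq_card; apply: stab_sub k n u i0.
have hkp : (0 < k%:R :> rat)%R by rewrite ltr0n.
rewrite !div1r lef_pV2 ?posrE ?mulr_gt0 ?exprn_gt0 ?ltr0n ?fact_gt0 //.
by rewrite ler_pM2r ?exprn_gt0 // ler_nat.
Qed.
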